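(* Let $\mathbb C$ be a homological category with finite colimits, and let $x\colon X\to A$, $y\colon Y\to A$ be morphisms whose images are normal monomorphisms. Then there exists an internal multiplication $X\times Y\to A$ over $(A,1_A)$ if and only if there exists an internal pregroupoid structure on the span $A/X\leftarrow A\to A/Y$. Moreover, when such a multiplication $m$ and such a pregroupoid structure $p$ exist, they uniquely determine each other by $p\gamma_1=m$.
   Context: A homological category is a regular pointed category in which the Split Short Five Lemma holds; images are taken in the (regular epi, mono) factorization; a normal monomorphism is a kernel of some morphism. Notation: $\iota_i$ coproduct injections, $[a,b]$ copairing, $\langle\cdot\rangle$ pairing. $(A+X)\times_A(A+Y)$ is the pullback of $[1,0]\colon A+X\to A$ and $[1,0]\colon A+Y\to A$, with projections $\pi_1,\pi_2$. An internal multiplication $X\times Y\to A$ over $(A,1_A)$ is a morphism $m\colon (A+X)\times_A(A+Y)\to A$ with $m\langle 1,\iota_1[1,0]\rangle=[1,x]$ and $m\langle\iota_1[1,0],1\rangle=[1,y]$. $A_3=A\times_{A/X}A\times_{A/Y}A$ is the limit of $A\xrightarrow{\mathsf{coker}(x)}A/X\xleftarrow{\mathsf{coker}(x)}A\xrightarrow{\mathsf{coker}(y)}A/Y\xleftarrow{\mathsf{coker}(y)}A$, and $\gamma_1=\langle [1,x]\pi_1,[1,0]\pi_1,[1,y]\pi_2\rangle$. An internal pregroupoid structure on the span $A/X\leftarrow A\to A/Y$ is a morphism $p\colon A_3\to A$ with $p\langle\pi_1,\pi_2,\pi_2\rangle=\pi_1$ on $A\times_{A/X}A$ and $p\langle\pi_1,\pi_1,\pi_2\rangle=\pi_2$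 on $A\times_{A/Y}A$ ($\pi_1,\pi_2$ the kernel-pair projections). *)

(* Defs.v *)
(* All universal constructions are given as Props (universal
   properties); chosen objects/morphisms are passed as binders of the theorem. *)
Set Implicit Arguments.
Unset Strict Implicit.

Record Category := {
  ob :> Type;
  hom : ob -> ob -> Type;
  comp : forall x y z : ob, hom y z -> hom x y -> hom x z;
  idm : forall a : ob, hom a a;
  comp_assoc : forall a b c d (h : hom c d) (g : hom b c) (f : hom a b),
      comp h (comp g f) = comp (comp h g) f;
  comp_id_l : forall a b (f : hom a b), comp (idm b) f = f;
  comp_id_r : forall a b (f : hom a b), comp f (idm a) = f
}.
Arguments hom {_} _ _.
Arguments comp {_ x y z} _ _.
Arguments idm {_} a.

Notation "g ∘ f" := (comp g f) (at level 40, left associativity).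

Section Defs.
Context {C : Category}.

Definition is_initial (I : C) : Prop := forall a : C, exists! f : hom I a, True.
Definition is_terminal (T : C) : Prop := forall a : C, exists! f : hom a T, True.
Definition is_zero_object (Z : C) : Prop := is_initial Z /\ is_terminal Z.

Definition zero_mor {a b : C} (f : hom a b) : Prop :=
  exists (Z : C) (u : hom a Z) (v : hom Z b), is_zero_object Z /\ f = v ∘ u.

Definition mono {a b : C} (f : hom a b) : Prop :=
  forall (t : C) (g h : hom t a), f ∘ g = f ∘ h -> g = h.

Definition iso {a b : C} (f : hom a b) : Prop :=
  exists g : hom b a, g ∘ f = idm a /\ f ∘ g = idm b.

Definition is_pullback {a b c p : C} (f : hom a c) (g : hom b c)
    (p1 : hom p a) (p2 : hom p b) : Prop :=
  f ∘ p1 = g ∘ p2 /\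
  forall (t : C) (u : hom t a) (v : hom t b), f ∘ u = g ∘ v ->
    exists! w : hom t p, p1 ∘ w = u /\ p2 ∘ w = v.

Definition is_coequalizer {r a q : C} (f g : hom r a) (e : hom a q) : Prop :=
  e ∘ f = e ∘ g /\
  forall (t : C) (h : hom a t), h ∘ f = h ∘ g -> exists! w : hom q t, w ∘ e = h.

Definition is_coproduct {a b s : C} (i1 : hom a s) (i2 : hom b s) : Prop :=
  forall (t : C) (u : hom a t) (v : hom b t),
    exists! w : hom s t, w ∘ i1 = u /\ w ∘ i2 = v.

Definition is_kernel {k a b : C} (kk : hom k a) (f : hom a b) : Prop :=
  zero_mor (f ∘ kk) /\
  forall (t : C) (g : hom t a), zero_mor (f ∘ g) -> exists! h : hom t k, kk ∘ h = g.

Definition is_cokernel {x a q : C} (f : hom x a) (c : hom a q) : Prop :=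
  zero_mor (c ∘ f) /\
  forall (t : C) (g : hom a t), zero_mor (g ∘ f) -> exists! h : hom q t, h ∘ c = g.

Definition normal_mono {k a : C} (m : hom k a) : Prop :=
  exists (b : C) (f : hom a b), is_kernel m f.

Definition regular_epi {a q : C} (e : hom a q) : Prop :=
  exists (r : C) (f g : hom r a), is_coequalizer f g e.

Definition has_finite_limits : Prop :=
  (exists T : C, is_terminal T) /\
  forall (a b c : C) (f : hom a c) (g : hom b c),
    exists (p : C) (p1 : hom p a) (p2 : hom p b), is_pullback f g p1 p2.

Definition has_finite_colimits : Prop :=
  (exists I : C, is_initial I) /\
  (forall a b : C, exists (s : C) (i1 : hom a s) (i2 : hom b s), is_coproduct i1 i2) /\
  (forall (r a : C) (f g : hom r a), exists (q : C) (e : hom a q), is_coequalizer f g e).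

Definition pointed : Prop := exists Z : C, is_zero_object Z.

Definition regular : Prop :=
  has_finite_limits /\
  (forall (a c k : C) (f : hom a c) (k1 k2 : hom k a), is_pullback f f k1 k2 ->
     exists (q : C) (e : hom a q), is_coequalizer k1 k2 e) /\
  (forall (a b c p : C) (f : hom a c) (g : hom b c) (p1 : hom p a) (p2 : hom p b),
     regular_epi f -> is_pullback f g p1 p2 -> regular_epi p2).

Definition split_short_five : Prop :=
  forall (K A B K' A' B' : C)
    (k : hom K A) (p : hom A B) (s : hom B A)
    (k' : hom K' A') (p' : hom A' B') (s' : hom B' A')
    (u : hom K K') (v : hom A A') (w : hom B B'),
    is_kernel k p -> p ∘ s = idm B ->
    is_kernel k' p' -> p' ∘ s' = idm B' ->
    v ∘ k = k' ∘ u -> p' ∘ v = w ∘ p -> v ∘ s = s' ∘ w ->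
    iso u -> iso w -> iso v.

Definition homological : Prop := pointed /\ regular /\ split_short_five.

Definition image_is_normal {x a : C} (f : hom x a) : Prop :=
  exists (I : C) (e : hom x I) (m : hom I a),
    regular_epi e /\ mono m /\ f = m ∘ e /\ normal_mono m.

(* A3 = A x_{A/X} A x_{A/Y} A : limit of A -qx-> A/X <-qx- A -qy-> A/Y <-qy- A *)
Definition is_limit3 {a qx qy l : C} (cx : hom a qx) (cy : hom a qy)
    (e1 e2 e3 : hom l a) : Prop :=
  cx ∘ e1 = cx ∘ e2 /\ cy ∘ e2 = cy ∘ e3 /\
  forall (t : C) (u1 u2 u3 : hom t a), cx ∘ u1 = cx ∘ u2 -> cy ∘ u2 = cy ∘ u3 ->
    exists! w : hom t l, e1 ∘ w = u1 /\ e2 ∘ w = u2 /\ e3 ∘ w = u3.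

End Defs.

(* Main.v *)
Require Import Defs.

Ltac ra := repeat rewrite <- comp_assoc.
Section Gen.
Context {C : Category}.


Lemma rw_r {a b c d : C} {f : hom a b} {g : hom b c} {h : hom a c}
  (H : g ∘ f = h) (z : hom d a) : g ∘ (f ∘ z) = h ∘ z.
Proof. rewrite comp_assoc, H; reflexivity. Qed.

Definition epi {a b : C} (f : hom a b) : Prop :=
  forall (t : C) (g h : hom b t), g ∘ f = h ∘ f -> g = h.

Lemma zero_unique {a b : C} (f g : hom a b) : zero_mor f -> zero_mor g -> f = g.
Proof.
  intros [Z [u [v [[HZi HZt] ->]]]] [Z' [u' [v' [[HZi' HZt'] ->]]]].
  destruct (HZi Z') as [t [_ Ht]].
  destruct (HZt' a) as [w [_ Hw]].
  destruct (HZi b) as [w' [_ Hw']].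
  assert (E1 : u' = t ∘ u) by (rewrite <- (Hw u' I); apply Hw; auto).
  assert (E2 : v = v' ∘ t) by (rewrite <- (Hw' v I); apply Hw'; auto).
  rewrite E1, E2. ra; reflexivity.
Qed.

Lemma zero_l {a b c : C} (f : hom a b) (h : hom b c) : zero_mor f -> zero_mor (h ∘ f).
Proof. intros [Z [u [v [HZ ->]]]]. exists Z, u, (h ∘ v). split; auto. ra; reflexivity. Qed.

Lemma zero_r {a b c : C} (f : hom b c) (h : hom a b) : zero_mor f -> zero_mor (f ∘ h).
Proof. intros [Z [u [v [HZ ->]]]]. exists Z, (u ∘ h), v. split; auto. ra; reflexivity. Qed.

Lemma zero_exists (HP : pointed (C := C)) (a b : C) : exists z : hom a b, zero_mor z.
Proof.
  destruct HP as [Z [HZi HZt]].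
  destruct (HZi b) as [v _]. destruct (HZt a) as [u _].
  exists (v ∘ u), Z, u, v. split; [split; auto | reflexivity].
Qed.

Lemma coeq_epi {r a q : C} (f g : hom r a) (e : hom a q) :
  is_coequalizer f g e -> epi e.
Proof.
  intros [He Hu] t h1 h2 Hh.
  destruct (Hu t (h1 ∘ e)) as [w [_ Hw]].
  { ra; rewrite He; reflexivity. }
  rewrite <- (Hw h1 eq_refl), <- (Hw h2 (eq_sym Hh)). reflexivity.
Qed.

Lemma regepi_epi {a q : C} (e : hom a q) : regular_epi e -> epi e.
Proof. intros [r [f [g H]]]. eapply coeq_epi; eauto. Qed.

Lemma epi_comp {a b c : C} (f : hom a b) (g : hom b c) : epi f -> epi g -> epi (g ∘ f).
Proof.
  intros Hf Hg t h1 h2 H. apply Hg, Hf. rewrite <- !comp_assoc. exact H.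
Qed.

Lemma pb_ext {a b c p t : C} {f : hom a c} {g : hom b c} {p1 : hom p a} {p2 : hom p b}
  (H : is_pullback f g p1 p2) (u v : hom t p) :
  p1 ∘ u = p1 ∘ v -> p2 ∘ u = p2 ∘ v -> u = v.
Proof.
  intros H1 H2. destruct H as [Hc Hu].
  destruct (Hu t (p1 ∘ u) (p2 ∘ u)) as [w [_ Hw]].
  { rewrite !comp_assoc, Hc; reflexivity. }
  rewrite <- (Hw u (conj eq_refl eq_refl)), <- (Hw v (conj (eq_sym H1) (eq_sym H2))).
  reflexivity.
Qed.

Lemma pb_swap {a c p : C} {f : hom a c} {p1 p2 : hom p a} :
  is_pullback f f p1 p2 -> is_pullback f f p2 p1.
Proof.
  intros [Hc Hu]. split; [auto|]. intros t u v Huv.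
  destruct (Hu t v u (eq_sym Huv)) as [w [[H1 H2] Hw]].
  exists w. split; [auto|]. intros w' [H1' H2']. apply Hw; auto.
Qed.

Lemma pb_mono {a b c p : C} {f : hom a c} {g : hom b c} {p1 : hom p a} {p2 : hom p b} :
  is_pullback f g p1 p2 -> mono f -> mono p2.
Proof.
  intros H Hf t u v Huv. apply (pb_ext H); [|auto].
  apply Hf. rewrite !comp_assoc. destruct H as [Hc _]. rewrite Hc, <- !comp_assoc, Huv.
  reflexivity.
Qed.

Lemma lim3_ext {a qx qy l t : C} {cx : hom a qx} {cy : hom a qy} {e1 e2 e3 : hom l a}
  (H : is_limit3 cx cy e1 e2 e3) (u v : hom t l) :
  e1 ∘ u = e1 ∘ v -> e2 ∘ u = e2 ∘ v -> e3 ∘ u = e3 ∘ v -> u = v.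
Proof.
  intros H1 H2 H3. destruct H as [Hc1 [Hc2 Hu]].
  destruct (Hu t (e1 ∘ u) (e2 ∘ u) (e3 ∘ u)) as [w [_ Hw]].
  { rewrite !comp_assoc, Hc1; reflexivity. }
  { rewrite !comp_assoc, Hc2; reflexivity. }
  rewrite <- (Hw u (conj eq_refl (conj eq_refl eq_refl))),
          <- (Hw v (conj (eq_sym H1) (conj (eq_sym H2) (eq_sym H3)))).
  reflexivity.
Qed.

Lemma coprod_ext {a b s t : C} {i1 : hom a s} {i2 : hom b s}
  (H : is_coproduct i1 i2) (u v : hom s t) :
  u ∘ i1 = v ∘ i1 -> u ∘ i2 = v ∘ i2 -> u = v.
Proof.
  intros H1 H2. destruct (H t (u ∘ i1) (u ∘ i2)) as [w [_ Hw]].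
  rewrite <- (Hw u (conj eq_refl eq_refl)), <- (Hw v (conj (eq_sym H1) (eq_sym H2))).
  reflexivity.
Qed.

Lemma image_mono (HR : regular (C := C)) {a b q K : C} (f : hom a b) (k1 k2 : hom K a)
  (Hk : is_pullback f f k1 k2) (e : hom a q) (He : is_coequalizer k1 k2 e)
  (n : hom q b) (Hn : n ∘ e = f) : mono n.
Proof.
  intros t g h Hgh.
  destruct HR as [[_ HPB] [_ Hstab]].
  assert (Re : regular_epi e) by (exists K, k1, k2; exact He).
  destruct (HPB _ _ _ e g) as [W1 [al [be Hp1]]].
  destruct (HPB _ _ _ e (h ∘ be)) as [W2 [ga [de Hp2]]].
  pose proof (Hstab _ _ _ _ _ _ _ _ Re Hp1) as Rb.
  pose proof (Hstab _ _ _ _ _ _ _ _ Re Hp2) as Rd.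
  assert (Hc : f ∘ (al ∘ de) = f ∘ ga).
  { rewrite <- Hn. ra. destruct Hp1 as [c1 _]. destruct Hp2 as [c2 _].
    rewrite (rw_r c1), c2. ra. rewrite (rw_r Hgh). ra. reflexivity. }
  destruct Hk as [_ Hku]. destruct (Hku _ _ _ Hc) as [z [[Z1 Z2] _]].
  apply (epi_comp de be (regepi_epi _ Rd) (regepi_epi _ Rb)).
  destruct Hp1 as [c1 _]. destruct Hp2 as [c2 _].
  rewrite comp_assoc, <- c1, <- comp_assoc, <- Z1, comp_assoc.
  destruct He as [He _]. rewrite He, <- comp_assoc, Z2, c2. ra. reflexivity.
Qed.


Lemma L_iso (HC : homological (C := C)) {Q B M : C} (f : hom Q B) (s : hom B Q)
  (Hs : f ∘ s = idm B) (n : hom M Q) (Hn : mono n) (s' : hom B M) (Hs' : n ∘ s' = s)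
  (Hk : forall (t : C) (g : hom t Q), zero_mor (f ∘ g) -> exists c, n ∘ c = g) : iso n.
Proof.
  destruct HC as [[Z HZ] [[[_ HPB] _] HSSF]].
  pose proof HZ as [HZi HZt].
  destruct (HZi B) as [zB _].
  destruct (HPB _ _ _ f zB) as [K [ka [zk Hpb]]].
  assert (Kk : is_kernel ka f).
  { split.
    - destruct Hpb as [Hc _]. exists Z, zk, zB. split; [exact HZ | exact Hc].
    - intros t g Hg. destruct (HZt t) as [tz [_ Htz]].
      assert (E : f ∘ g = zB ∘ tz).
      { apply zero_unique; auto. exists Z, tz, zB. split; [exact HZ | reflexivity]. }
      destruct Hpb as [Hc Hu]. destruct (Hu t g tz E) as [w [[W1 W2] Hw]].
      exists w. split; auto. intros w' Hw'. apply Hw. split; auto.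
      symmetry. apply Htz; auto. }
  destruct (Hk K ka (proj1 Kk)) as [k' Hk'].
  assert (Kk' : is_kernel k' (f ∘ n)).
  { split.
    - rewrite <- comp_assoc, Hk'. exact (proj1 Kk).
    - intros t g Hg. destruct (proj2 Kk t (n ∘ g)) as [h [Hh Hhu]].
      { rewrite comp_assoc; exact Hg. }
      exists h. split.
      + apply Hn. rewrite comp_assoc, Hk'; exact Hh.
      + intros h' Hh'. apply Hhu. rewrite <- Hk', <- comp_assoc, Hh'. reflexivity. }
  assert (Iid : forall a : C, iso (idm a)).
  { intro a. exists (idm a). split; apply comp_id_l. }
  apply (HSSF K M B K Q B k' (f ∘ n) s' ka f s (idm K) n (idm B)); auto.
  - rewrite <- comp_assoc, Hs'; exact Hs.
  - rewrite Hk', comp_id_r; reflexivity.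
  - rewrite comp_id_l; reflexivity.
  - rewrite comp_id_r; exact Hs'.
Qed.

Lemma equalizer_exists (HFL : has_finite_limits (C := C)) {Q D : C} (h1 h2 : hom Q D) :
  exists (M : C) (n : hom M Q), mono n /\ h1 ∘ n = h2 ∘ n /\
    forall (t : C) (g : hom t Q), h1 ∘ g = h2 ∘ g -> exists c, n ∘ c = g.
Proof.
  destruct HFL as [[T HT] HPB].
  destruct (HT Q) as [tQ [_ HtQ]]. destruct (HT D) as [tD [_ HtD]].
  destruct (HPB _ _ _ tQ tD) as [PR [p1 [p2 Hpr]]].
  assert (Ex : forall (h : hom Q D), exists a : hom Q PR, p1 ∘ a = idm Q /\ p2 ∘ a = h).
  { intro h. destruct Hpr as [_ Hu]. destruct (Hu Q (idm Q) h) as [a [Ha _]].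
    - destruct (HT Q) as [w [_ Hw]]. rewrite <- (Hw (tQ ∘ idm Q) I). apply Hw; auto.
    - exists a; exact Ha. }
  destruct (Ex h1) as [a1 [A11 A12]]. destruct (Ex h2) as [a2 [A21 A22]].
  destruct (HPB _ _ _ a1 a2) as [E [al [be Hpb]]].
  assert (Eab : al = be).
  { destruct Hpb as [Hc _].
    rewrite <- (comp_id_l al), <- A11, <- comp_assoc, Hc, comp_assoc, A21, comp_id_l.
    reflexivity. }
  subst be.
  exists E, al. split; [|split].
  - intros t u v Huv. apply (pb_ext Hpb); auto.
  - destruct Hpb as [Hc _]. rewrite <- A12, <- A22, <- !comp_assoc, Hc. reflexivity.
  - intros t g Hg. assert (E1 : a1 ∘ g = a2 ∘ g).
    { apply (pb_ext Hpr).
      + rewrite !comp_assoc, A11, A21. reflexivity.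
      + rewrite !comp_assoc, A12, A22. exact Hg. }
    destruct Hpb as [_ Hu]. destruct (Hu t g g E1) as [c [[c1 _] _]].
    exists c; exact c1.
Qed.

Lemma J_eq (HC : homological (C := C)) {Q B D : C} (f : hom Q B) (s : hom B Q)
  (Hs : f ∘ s = idm B) (h1 h2 : hom Q D) (H1 : h1 ∘ s = h2 ∘ s)
  (H2 : forall (t : C) (g : hom t Q), zero_mor (f ∘ g) -> h1 ∘ g = h2 ∘ g) : h1 = h2.
Proof.
  pose proof HC as [_ [[HFL _] _]].
  destruct (equalizer_exists HFL h1 h2) as [M [n [Hn [Heq Hu]]]].
  destruct (Hu _ s H1) as [s' Hs'].
  destruct (L_iso HC f s Hs n Hn s' Hs') as [ni [_ Hni]].
  { intros t g Hg. apply Hu. apply H2; auto. }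
  rewrite <- (comp_id_r h1), <- (comp_id_r h2), <- Hni, !comp_assoc, Heq. reflexivity.
Qed.

Lemma orth {X I M Q : C} (e : hom X I) (Re : regular_epi e) (n : hom M Q) (Hn : mono n)
  (j : hom I Q) (c : hom X M) (H : n ∘ c = j ∘ e) : exists d, n ∘ d = j.
Proof.
  destruct Re as [r [a [b He]]]. pose proof He as [Hc Hu].
  destruct (Hu M c) as [d [Hd _]].
  { apply Hn. rewrite !comp_assoc, H, <- !comp_assoc, Hc. reflexivity. }
  exists d. apply (coeq_epi a b e He). rewrite <- comp_assoc, Hd. exact H.
Qed.

Lemma normal_factor {X I A Q : C} (x : hom X A) (m : hom I A) (e : hom X I)
  (Hx : x = m ∘ e) (Nm : normal_mono m) (q : hom A Q) (Hq : is_cokernel x q)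
  {t : C} (g : hom t A) (Hg : zero_mor (q ∘ g)) : exists c, m ∘ c = g.
Proof.
  destruct Nm as [b [f [Kz Ku]]].
  destruct (proj2 Hq b f) as [h [Hh _]].
  { rewrite Hx, comp_assoc. apply zero_r; auto. }
  destruct (Ku t g) as [c [Hc _]].
  { rewrite <- Hh, <- comp_assoc. apply zero_l; auto. }
  exists c; exact Hc.
Qed.

Lemma normal_zero (HP : pointed (C := C)) {X I A Q : C} (x : hom X A) (m : hom I A)
  (e : hom X I) (Ee : epi e) (Hx : x = m ∘ e) (q : hom A Q) (Hq : is_cokernel x q) :
  zero_mor (q ∘ m).
Proof.
  destruct (zero_exists HP I Q) as [z Hz].
  assert (E : q ∘ m = z).
  { apply Ee. rewrite <- comp_assoc, <- Hx. apply zero_unique.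
    - exact (proj1 Hq).
    - apply zero_r; auto. }
  rewrite E; exact Hz.
Qed.

Lemma cover_epi (HC : homological (C := C)) {A Qq Kp I X W : C} (q : hom A Qq)
  (ka kb : hom Kp A) (Hpb : is_pullback q q ka kb) (m : hom I A) (e : hom X I)
  (x : hom X A) (Re : regular_epi e) (Hx : x = m ∘ e) (Nm : normal_mono m)
  (Hq : is_cokernel x q) (G : hom W Kp) (d : hom A W)
  (Hd1 : ka ∘ (G ∘ d) = idm A) (Hd2 : kb ∘ (G ∘ d) = idm A) (c : hom X W)
  (Hc1 : ka ∘ (G ∘ c) = x) (Hc2 : zero_mor (kb ∘ (G ∘ c))) : epi G.
Proof.
  pose proof HC as [HP _].
  intros t h1 h2 Hh. apply (J_eq HC kb (G ∘ d) Hd2).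
  - rewrite !comp_assoc, Hh; reflexivity.
  - intros t' g Hg.
    destruct (normal_factor x m e Hx Nm q Hq (ka ∘ g)) as [c0 Hc0].
    { rewrite comp_assoc, (proj1 Hpb), <- comp_assoc. apply zero_l; auto. }
    destruct (zero_exists HP I A) as [z Hz].
    destruct (proj2 Hpb I m z) as [j [[J1 J2] _]].
    { apply zero_unique.
      - apply (normal_zero HP x m e (regepi_epi _ Re) Hx q Hq).
      - apply zero_l; auto. }
    assert (Je : j ∘ e = G ∘ c).
    { apply (pb_ext Hpb).
      - rewrite !comp_assoc, J1, <- Hx. rewrite <- comp_assoc, Hc1. reflexivity.
      - rewrite !comp_assoc, J2. apply zero_unique.
        + apply zero_r; auto.
        + rewrite <- comp_assoc; auto. }
    assert (Gj : g = j ∘ c0).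
    { apply (pb_ext Hpb).
      - rewrite comp_assoc, J1, Hc0; reflexivity.
      - rewrite comp_assoc, J2. apply zero_unique; auto. apply zero_r; auto. }
    assert (Hj : h1 ∘ j = h2 ∘ j).
    { apply (regepi_epi _ Re). rewrite <- !comp_assoc, Je, !comp_assoc, Hh. reflexivity. }
    rewrite Gj, !comp_assoc, Hj. reflexivity.
Qed.

End Gen.

Theorem corollary1p9 (C : Category) (HC : homological (C := C))
  (HCol : has_finite_colimits (C := C))
  (A X Y : C) (x : hom X A) (y : hom Y A)
  (Hx : image_is_normal x) (Hy : image_is_normal y)
  (* coproducts A+X, A+Y *)
  (AX : C) (iX1 : hom A AX) (iX2 : hom X AX) (HAX : is_coproduct iX1 iX2)
  (AY : C) (iY1 : hom A AY) (iY2 : hom Y AY) (HAY : is_coproduct iY1 iY2)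
  (* rX = [1,0] : A+X -> A,  rY = [1,0] : A+Y -> A *)
  (rX : hom AX A) (HrX : rX ∘ iX1 = idm A /\ zero_mor (rX ∘ iX2))
  (rY : hom AY A) (HrY : rY ∘ iY1 = idm A /\ zero_mor (rY ∘ iY2))
  (* sX = [1,x],  sY = [1,y] *)
  (sX : hom AX A) (HsX : sX ∘ iX1 = idm A /\ sX ∘ iX2 = x)
  (sY : hom AY A) (HsY : sY ∘ iY1 = idm A /\ sY ∘ iY2 = y)
  (* P = (A+X) x_A (A+Y) *)
  (P : C) (pi1 : hom P AX) (pi2 : hom P AY) (HP : is_pullback rX rY pi1 pi2)
  (* u1 = <1, i1[1,0]>,  u2 = <i1[1,0], 1> *)
  (u1 : hom AX P) (Hu1 : pi1 ∘ u1 = idm AX /\ pi2 ∘ u1 = iY1 ∘ rX)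
  (u2 : hom AY P) (Hu2 : pi1 ∘ u2 = iX1 ∘ rY /\ pi2 ∘ u2 = idm AY)
  (* cokernels A -> A/X, A -> A/Y *)
  (QX : C) (qX : hom A QX) (HqX : is_cokernel x qX)
  (QY : C) (qY : hom A QY) (HqY : is_cokernel y qY)
  (* A3 = A x_{A/X} A x_{A/Y} A *)
  (A3 : C) (e1 e2 e3 : hom A3 A) (HA3 : is_limit3 qX qY e1 e2 e3)
  (* kernel pairs A x_{A/X} A and A x_{A/Y} A *)
  (KX : C) (kX1 kX2 : hom KX A) (HKX : is_pullback qX qX kX1 kX2)
  (KY : C) (kY1 kY2 : hom KY A) (HKY : is_pullback qY qY kY1 kY2)
  (* dX = <pi1,pi2,pi2> on KX,  dY = <pi1,pi1,pi2> on KY *)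
  (dX : hom KX A3) (HdX : e1 ∘ dX = kX1 /\ e2 ∘ dX = kX2 /\ e3 ∘ dX = kX2)
  (dY : hom KY A3) (HdY : e1 ∘ dY = kY1 /\ e2 ∘ dY = kY1 /\ e3 ∘ dY = kY2)
  (* gamma1 = <[1,x]pi1, [1,0]pi1, [1,y]pi2> *)
  (g1 : hom P A3)
  (Hg1 : e1 ∘ g1 = sX ∘ pi1 /\ e2 ∘ g1 = rX ∘ pi1 /\ e3 ∘ g1 = sY ∘ pi2) :
  let is_mult := fun m : hom P A => m ∘ u1 = sX /\ m ∘ u2 = sY in
  let is_preg := fun p : hom A3 A => p ∘ dX = kX1 /\ p ∘ dY = kY2 in
  ((exists m, is_mult m) <-> (exists p, is_preg p)) /\
  (forall m, is_mult m -> exists! p, is_preg p /\ p ∘ g1 = m) /\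
  (forall p, is_preg p -> is_mult (p ∘ g1)).
Proof.
  cbv beta zeta.
  pose proof HC as [HPt [HR HSSF]]. pose proof HR as [[HT HPB] [HCKP HStab]].
  destruct HsX as [sX1 sX2]. destruct HsY as [sY1 sY2].
  destruct HrX as [rX1 rX2]. destruct HrY as [rY1 rY2].
  destruct Hu1 as [u11 u12]. destruct Hu2 as [u21 u22].
  destruct Hg1 as [g11 [g12 g13]].
  destruct HdX as [dX1 [dX2 dX3]]. destruct HdY as [dY1 [dY2 dY3]].
  destruct Hx as [IX [ex [mX [Rex [Mx [Ex Nx]]]]]].
  destruct Hy as [IY [ey [mY [Rey [My [Ey Ny]]]]]].
  assert (HQX : qX ∘ sX = qX ∘ rX).
  { apply (coprod_ext HAX).
    - rewrite <- !comp_assoc, sX1, rX1. reflexivity.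
    - rewrite <- !comp_assoc, sX2. apply zero_unique.
      + exact (proj1 HqX).
      + apply zero_l; auto. }
  destruct (proj2 HKX AX sX rX HQX) as [g' [[G1 G2] _]].
  assert (HQY : qY ∘ rY = qY ∘ sY).
  { apply (coprod_ext HAY).
    - rewrite <- !comp_assoc, sY1, rY1. reflexivity.
    - rewrite <- !comp_assoc, sY2. apply zero_unique.
      + apply zero_l; auto.
      + exact (proj1 HqY). }
  destruct (proj2 HKY AY rY sY HQY) as [g'' [[G1' G2'] _]].
  assert (DX : dX ∘ g' = g1 ∘ u1).
  { apply (lim3_ext HA3); rewrite !comp_assoc.
    - rewrite dX1, g11, G1, <- comp_assoc, u11, comp_id_r. reflexivity.
    - rewrite dX2, g12, G2, <- comp_assoc, u11, comp_id_r. reflexivity.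
    - rewrite dX3, g13, G2, <- comp_assoc, u12, comp_assoc, sY1, comp_id_l. reflexivity. }
  assert (DY : dY ∘ g'' = g1 ∘ u2).
  { apply (lim3_ext HA3); rewrite !comp_assoc.
    - rewrite dY1, g11, G1', <- comp_assoc, u21, comp_assoc, sX1, comp_id_l. reflexivity.
    - rewrite dY2, g12, G1', <- comp_assoc, u21, comp_assoc, rX1, comp_id_l. reflexivity.
    - rewrite dY3, g13, G2', <- comp_assoc, u22, comp_id_r. reflexivity. }
  assert (P3 : forall p : hom A3 A, (p ∘ dX = kX1 /\ p ∘ dY = kY2) ->
                 (p ∘ g1 ∘ u1 = sX /\ p ∘ g1 ∘ u2 = sY)).
  { intros p [Hp1 Hp2]. split.
    - rewrite <- comp_assoc, <- DX, comp_assoc, Hp1, G1. reflexivity.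
    - rewrite <- comp_assoc, <- DY, comp_assoc, Hp2, G2'. reflexivity. }
  assert (EpX : epi g').
  { apply (cover_epi HC qX kX1 kX2 HKX mX ex x Rex Ex Nx HqX g' iX1 
             ltac:(rewrite comp_assoc, G1, sX1; reflexivity)
             ltac:(rewrite comp_assoc, G2, rX1; reflexivity) iX2
             ltac:(rewrite comp_assoc, G1, sX2; reflexivity)).
    rewrite comp_assoc, G2; exact rX2. }
  assert (EpY : epi g'').
  { apply (cover_epi HC qY kY2 kY1 (pb_swap HKY) mY ey y Rey Ey Ny HqY g'' iY1
             ltac:(rewrite comp_assoc, G2', sY1; reflexivity)
             ltac:(rewrite comp_assoc, G1', rY1; reflexivity) iY2
             ltac:(rewrite comp_assoc, G2', sY2; reflexivity)).
    rewrite comp_assoc, G1'; exact rY2. }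
  destruct (HPB _ _ _ g1 g1) as [E [k1 [k2 HE]]].
  destruct (HCKP _ _ _ g1 k1 k2 HE) as [Qc [e0 He0]].
  destruct (proj2 He0 A3 g1 (proj1 HE)) as [n [Hn _]].
  pose proof (image_mono HR g1 k1 k2 HE e0 He0 n Hn) as Mn.
  destruct (zero_exists HPt IX A) as [zX HzX].
  destruct (zero_exists HPt IY A) as [zY HzY].
  pose proof (normal_zero HPt x mX ex (regepi_epi _ Rex) Ex qX HqX) as NZX.
  pose proof (normal_zero HPt y mY ey (regepi_epi _ Rey) Ey qY HqY) as NZY.
  destruct (proj2 HKY A3 e2 e3 (proj1 (proj2 HA3))) as [pi23 [[PP1 PP2] _]].
  assert (Hs : pi23 ∘ dY = idm KY).
  { apply (pb_ext HKY).
    - rewrite comp_assoc, PP1, dY2, comp_id_r. reflexivity.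
    - rewrite comp_assoc, PP2, dY3, comp_id_r. reflexivity. }
  destruct (proj2 HKY A (idm A) (idm A) eq_refl) as [deY [[DY1 DY2] _]].
  destruct (proj2 (proj2 HA3) IX mX zX zX) as [JX [[JX1 [JX2 JX3]] _]].
  { apply zero_unique; auto. apply zero_l; auto. }
  { reflexivity. }
  destruct (proj2 (proj2 HA3) IY zY zY mY) as [JY [[JY1 [JY2 JY3]] _]].
  { reflexivity. }
  { apply zero_unique; auto. apply zero_l; auto. }
  assert (JXe : JX ∘ ex = g1 ∘ u1 ∘ iX2).
  { apply (lim3_ext HA3); rewrite !comp_assoc.
    - rewrite JX1, g11, <- Ex, <- !comp_assoc, (rw_r u11), comp_id_l, sX2. reflexivity.
    - rewrite JX2, g12, <- !comp_assoc, (rw_r u11), comp_id_l. apply zero_unique.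
      + apply zero_r; auto.
      + exact rX2.
    - rewrite JX3, g13, <- !comp_assoc, (rw_r u12). apply zero_unique.
      + apply zero_r; auto.
      + ra; repeat (first [exact rX2 | apply zero_l]). }
  assert (JYe : JY ∘ ey = g1 ∘ u2 ∘ iY2).
  { apply (lim3_ext HA3); rewrite !comp_assoc.
    - rewrite JY1, g11, <- !comp_assoc, (rw_r u21). apply zero_unique.
      + apply zero_r; auto.
      + ra; repeat (first [exact rY2 | apply zero_l]).
    - rewrite JY2, g12, <- !comp_assoc, (rw_r u21). apply zero_unique.
      + apply zero_r; auto.
      + ra; repeat (first [exact rY2 | apply zero_l]).
    - rewrite JY3, g13, <- Ey, <- !comp_assoc, (rw_r u22), comp_id_l, sY2. reflexivity. }
  assert (D3 : dY ∘ deY = g1 ∘ u1 ∘ iX1).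
  { apply (lim3_ext HA3); rewrite !comp_assoc.
    - rewrite dY1, DY1, g11, <- !comp_assoc, (rw_r u11), comp_id_l, sX1. reflexivity.
    - rewrite dY2, DY1, g12, <- !comp_assoc, (rw_r u11), comp_id_l, rX1. reflexivity.
    - rewrite dY3, DY2, g13, <- !comp_assoc, (rw_r u12); ra; rewrite rX1, comp_id_r, sY1.
      reflexivity. }
  destruct (orth ex Rex n Mn JX (e0 ∘ (u1 ∘ iX2))) as [dJX HdJX].
  { rewrite JXe, <- Hn. rewrite <- !comp_assoc. reflexivity. }
  destruct (orth ey Rey n Mn JY (e0 ∘ (u2 ∘ iY2))) as [dJY HdJY].
  { rewrite JYe, <- Hn. rewrite <- !comp_assoc. reflexivity. }
  destruct (HPB _ _ _ n dY) as [N' [nu [n' HN]]].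
  pose proof (pb_mono HN Mn) as Mn'.
  destruct (proj2 HN A (e0 ∘ (u1 ∘ iX1)) deY) as [s' [[S'1 S'2] _]].
  { rewrite D3, <- Hn, <- !comp_assoc. reflexivity. }
  destruct (L_iso HC kY1 deY DY1 n' Mn' s' S'2) as [ni' [_ Hni']].
  { intros t g Hg.
    destruct (normal_factor y mY ey Ey Ny qY HqY (kY2 ∘ g)) as [c0 Hc0].
    { rewrite comp_assoc, <- (proj1 HKY), <- comp_assoc. apply zero_l; auto. }
    assert (Eg : dY ∘ g = JY ∘ c0).
    { apply (lim3_ext HA3); rewrite !comp_assoc.
      - rewrite dY1, JY1. apply zero_unique; auto. apply zero_r; auto.
      - rewrite dY2, JY2. apply zero_unique; auto. apply zero_r; auto.
      - rewrite dY3, JY3. auto. }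
    destruct (proj2 HN t (dJY ∘ c0) g) as [w [[_ W2] _]].
    { rewrite Eg, comp_assoc, HdJY. reflexivity. }
    exists w; exact W2. }
  destruct (L_iso HC pi23 dY Hs n Mn (nu ∘ ni')) as [ni [Hni1 Hni2]].
  { rewrite comp_assoc, (proj1 HN), <- comp_assoc, Hni', comp_id_r. reflexivity. }
  { intros t g Hg.
    assert (Z2 : zero_mor (e2 ∘ g)).
    { rewrite <- PP1, <- comp_assoc. apply zero_l; auto. }
    assert (Z3 : zero_mor (e3 ∘ g)).
    { rewrite <- PP2, <- comp_assoc. apply zero_l; auto. }
    destruct (normal_factor x mX ex Ex Nx qX HqX (e1 ∘ g)) as [c0 Hc0].
    { rewrite comp_assoc, (proj1 HA3), <- comp_assoc. apply zero_l; auto. }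
    exists (dJX ∘ c0). rewrite comp_assoc, HdJX.
    symmetry. apply (lim3_ext HA3); rewrite !comp_assoc.
    - rewrite JX1. auto.
    - rewrite JX2. apply zero_unique; auto. apply zero_r; auto.
    - rewrite JX3. apply zero_unique; auto. apply zero_r; auto. }
  assert (P2 : forall m : hom P A, (m ∘ u1 = sX /\ m ∘ u2 = sY) ->
     exists! p : hom A3 A, (p ∘ dX = kX1 /\ p ∘ dY = kY2) /\ p ∘ g1 = m).
  { intros m [Hm1 Hm2].
    destruct (HPB _ _ _ g'' g'') as [EY [l1 [l2 HEY]]].
    assert (R1 : sX ∘ pi1 = e1 ∘ g1) by (symmetry; exact g11).
    assert (R2 : rY ∘ pi2 = e2 ∘ g1) by (rewrite g12; symmetry; exact (proj1 HP)).
    assert (R3 : sY ∘ pi2 = e3 ∘ g1) by (symmetry; exact g13).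
    assert (Heq : g'' ∘ (pi2 ∘ k1) = g'' ∘ (pi2 ∘ k2)).
    { apply (pb_ext HKY); rewrite !comp_assoc.
      - rewrite G1', R2, <- !comp_assoc, (proj1 HE). reflexivity.
      - rewrite G2', R3, <- !comp_assoc, (proj1 HE). reflexivity. }
    destruct (proj2 HEY E (pi2 ∘ k1) (pi2 ∘ k2) Heq) as [f [[F1 F2] _]].
    destruct (proj2 HE EY (u2 ∘ l1) (u2 ∘ l2)) as [sg [[S1 S2] _]].
    { rewrite !comp_assoc, <- DY, <- !comp_assoc, (proj1 HEY). reflexivity. }
    assert (Hfs : f ∘ sg = idm EY).
    { apply (pb_ext HEY).
      - rewrite comp_assoc, F1, <- comp_assoc, S1, comp_assoc, u22, comp_id_l, comp_id_r.
        reflexivity.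
      - rewrite comp_assoc, F2, <- comp_assoc, S2, comp_assoc, u22, comp_id_l, comp_id_r.
        reflexivity. }
    assert (Mk : m ∘ k1 = m ∘ k2).
    { apply (J_eq HC f sg Hfs).
      - rewrite <- !comp_assoc, S1, S2, !comp_assoc, Hm2, <- G2', <- !comp_assoc, (proj1 HEY).
        reflexivity.
      - intros t g Hg.
        assert (KU : forall k : hom E P, zero_mor (pi2 ∘ (k ∘ g)) ->
                   k ∘ g = u1 ∘ (pi1 ∘ (k ∘ g))).
        { intros k Hk. apply (pb_ext HP).
          - rewrite (comp_assoc pi1 u1), u11, comp_id_l. reflexivity.
          - rewrite (comp_assoc pi2 u1), u12, <- comp_assoc, (comp_assoc rX pi1), (proj1 HP).
            apply zero_unique; auto. apply zero_l. rewrite <- comp_assoc. apply zero_l; auto. }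
        rewrite <- !comp_assoc, (KU k1), (KU k2).
        + rewrite !comp_assoc, Hm1, R1, <- !comp_assoc, (rw_r (proj1 HE)). ra. reflexivity.
        + rewrite comp_assoc, <- F2, <- comp_assoc. apply zero_l; auto.
        + rewrite comp_assoc, <- F1, <- comp_assoc. apply zero_l; auto. }
    destruct (proj2 He0 A m Mk) as [w [Hw _]].
    assert (PG : w ∘ ni ∘ g1 = m).
    { rewrite <- Hn, <- comp_assoc, (comp_assoc ni), Hni1, comp_id_l. exact Hw. }
    exists (w ∘ ni). split; [split; [split|]|].
    - apply EpX. rewrite <- comp_assoc, DX, comp_assoc, PG, Hm1, G1. reflexivity.
    - apply EpY. rewrite <- comp_assoc, DY, comp_assoc, PG, Hm2, G2'. reflexivity.
    - exact PG.
    - intros p' [_ Hp'].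
      assert (Wn : w = p' ∘ n).
      { apply (coeq_epi _ _ _ He0). rewrite Hw, <- comp_assoc, Hn. symmetry; exact Hp'. }
      rewrite Wn, <- comp_assoc, Hni2, comp_id_r. reflexivity. }
  split; [split|split].
  - intros [m Hm]. destruct (P2 m Hm) as [p [[Hp _] _]]. exists p; exact Hp.
  - intros [p Hp]. exists (p ∘ g1). apply P3; exact Hp.
  - exact P2.
  - intros p Hp. apply P3; exact Hp.
Qed.
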